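(* Let $\mathbf{A}\in\mathbb{R}^{m\times n}$, $b\in\mathcal{R}(\mathbf{A})$, and let $f:\mathbb{R}^n\to\mathbb{R}$ be finite everywhere and strongly convex. Let $\hat x$ be the unique solution of $\min_{x\in\mathbb{R}^n} f(x)$ subject to $\mathbf{A}x=b$, let $\Psi(y)=f^*(\mathbf{A}^\top y)-b^\top y$ for $y\in\mathbb{R}^m$, and let $\hat\Psi=\min_{y\in\mathbb{R}^m}\Psi(y)$. Let $(y^k)_k\subset\mathbb{R}^m$ be any sequence and define $d^k=\mathbf{A}^\top y^k$ and $x^k=\nabla f^*(d^k)$. Then for every $k$, $$D_f^{d^k}(x^k,\hat x)=\Psi(y^k)-\hat\Psi.$$
   Context: $f^*(x^* )=\sup_{y\in\mathbb{R}^n}\langle x^*,y\rangle-f(y)$ is the Fenchel conjugate; for strongly convex finite $f$ it is finite and differentiable, and $\nabla f^*(d)\in\mathbb{R}^n$ satisfies $d\in\partial f(\nabla f^*(d))$. For $x^*\in\partial f(x)$, the Bregman distance is $D_f^{x^*}(x,y)=f(y)-f(x)-\langle x^*,y-x\rangle$. The minimum $\hat\Psi$ of the dual function $\Psi$ is attained and strong duality $\hat\Psi=-f(\hat x)$ holds. *)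

(* Defs.v *)
From HB Require Import structures.
From mathcomp Require Import all_boot all_order all_algebra.
From mathcomp Require Import all_classical all_reals all_analysis.
Set Implicit Arguments. Unset Strict Implicit. Unset Printing Implicit Defensive.
Import Order.TTheory GRing.Theory Num.Theory.
Import numFieldNormedType.Exports.
Local Open Scope classical_set_scope.
Local Open Scope ring_scope.

Definition inner (R : realType) (n : nat) (u v : 'cV[R]_n) : R :=
  \sum_(i < n) u i 0 * v i 0.

Definition strongly_convex (R : realType) (n : nat) (f : 'cV[R]_n -> R) : Prop :=
  exists mu : R, 0 < mu /\
    forall (x y : 'cV[R]_n) (t : R), 0 <= t <= 1 ->
      f (t *: x + (1 - t) *: y) <=
        t * f x + (1 - t) * f y - mu / 2 * t * (1 - t) * inner (x - y) (x - y).

Definition fconj (R : realType) (n : nat) (f : 'cV[R]_n -> R) (xs : 'cV[R]_n) : R :=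
  sup [set inner xs y - f y | y in [set: 'cV[R]_n]].

Definition in_subdiff (R : realType) (n : nat) (f : 'cV[R]_n -> R) (x xs : 'cV[R]_n) : Prop :=
  forall y, f x + inner xs (y - x) <= f y.

Definition is_gradient (R : realType) (n : nat) (F : 'cV[R]_n -> R) (d g : 'cV[R]_n) : Prop :=
  differentiable F d /\ forall h : 'cV[R]_n, ('d F d) h = inner g h.

Definition bregman (R : realType) (n : nat) (f : 'cV[R]_n -> R) (xs x y : 'cV[R]_n) : R :=
  f y - f x - inner xs (y - x).

Definition Psi (R : realType) (m n : nat) (f : 'cV[R]_n -> R) (A : 'M[R]_(m, n))
  (b : 'cV[R]_m) (y : 'cV[R]_m) : R :=
  fconj f (A^T *m y) - inner b y.

Definition Psihat (R : realType) (m n : nat) (f : 'cV[R]_n -> R) (A : 'M[R]_(m, n))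
  (b : 'cV[R]_m) : R :=
  inf [set Psi f A b y | y in [set: 'cV[R]_m]].

(* Main.v *)
Require Import Defs.
From HB Require Import structures.
From mathcomp Require Import all_boot all_order all_algebra.
From mathcomp Require Import all_classical all_reals all_analysis.
From mathcomp Require Import ring lra.
Set Implicit Arguments. Unset Strict Implicit. Unset Printing Implicit Defensive.
Import Order.TTheory GRing.Theory Num.Theory.
Import numFieldNormedType.Exports.
Local Open Scope classical_set_scope.
Local Open Scope ring_scope.

Lemma innerC (R : realType) n (u v : 'cV[R]_n) : inner u v = inner v u.
Proof. by apply: eq_bigr => i _; rewrite mulrC. Qed.

Lemma innerDl (R : realType) n (u v w : 'cV[R]_n) :
  inner (u + v) w = inner u w + inner v w.
Proof. by rewrite /inner -big_split; apply: eq_bigr => i _; rewrite mxE mulrDl. Qed.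

Lemma innerZl (R : realType) n (a : R) (u w : 'cV[R]_n) :
  inner (a *: u) w = a * inner u w.
Proof. by rewrite /inner mulr_sumr; apply: eq_bigr => i _; rewrite mxE mulrA. Qed.

Lemma innerNl (R : realType) n (u w : 'cV[R]_n) : inner (- u) w = - inner u w.
Proof. by rewrite -scaleN1r innerZl mulN1r. Qed.

Lemma innerBl (R : realType) n (u v w : 'cV[R]_n) :
  inner (u - v) w = inner u w - inner v w.
Proof. by rewrite innerDl innerNl. Qed.

Lemma innerDr (R : realType) n (u v w : 'cV[R]_n) :
  inner w (u + v) = inner w u + inner w v.
Proof. by rewrite !(innerC w) innerDl. Qed.

Lemma innerZr (R : realType) n (a : R) (u w : 'cV[R]_n) :
  inner w (a *: u) = a * inner w u.
Proof. by rewrite !(innerC w) innerZl. Qed.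

Lemma innerNr (R : realType) n (u w : 'cV[R]_n) : inner w (- u) = - inner w u.
Proof. by rewrite !(innerC w) innerNl. Qed.

Lemma innerBr (R : realType) n (u v w : 'cV[R]_n) :
  inner w (u - v) = inner w u - inner w v.
Proof. by rewrite innerDr innerNr. Qed.

Lemma inner0l (R : realType) n (w : 'cV[R]_n) : inner 0 w = 0.
Proof. by rewrite /inner big1 // => i _; rewrite mxE mul0r. Qed.

Lemma inner0r (R : realType) n (w : 'cV[R]_n) : inner w 0 = 0.
Proof. by rewrite innerC inner0l. Qed.

Lemma inner_ge0 (R : realType) n (u : 'cV[R]_n) : 0 <= inner u u.
Proof. by apply: sumr_ge0 => i _; rewrite -expr2 sqr_ge0. Qed.

Lemma inner_tr (R : realType) m n (A : 'M[R]_(m, n)) (y : 'cV[R]_m) (x : 'cV[R]_n) :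
  inner (A^T *m y) x = inner y (A *m x).
Proof.
rewrite /inner.
under eq_bigr do rewrite !mxE big_distrl /=.
rewrite exchange_big /=; apply: eq_bigr => j _.
rewrite !mxE big_distrr /=; apply: eq_bigr => i _.
by rewrite !mxE mulrCA mulrA.
Qed.

Lemma inner_delta (R : realType) n (i0 : 'I_n) (w : 'cV[R]_n) :
  inner (delta_mx i0 0) w = w i0 0.
Proof.
rewrite /inner (bigD1 i0) //= big1 ?addr0.
  by rewrite mxE !eqxx mul1r.
by move=> i /negPf Hi; rewrite mxE Hi mul0r.
Qed.

Definition convexf (R : realType) n (phi : 'cV[R]_n -> R) :=
  forall (a b : 'cV[R]_n) (t : R), 0 <= t <= 1 ->
    phi (t *: a + (1 - t) *: b) <= t * phi a + (1 - t) * phi b.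

Lemma sc_convex (R : realType) n (f : 'cV[R]_n -> R) :
  strongly_convex f -> convexf f.
Proof.
move=> [mu [mu0 H]] a b t /andP[t0 t1]; apply: le_trans (H a b t _) _.
  by rewrite t0 t1.
have : 0 <= mu / 2 * t * (1 - t) * inner (a - b) (a - b).
  apply: mulr_ge0; last exact: inner_ge0.
  apply: mulr_ge0; last by rewrite subr_ge0.
  by apply: mulr_ge0 => //; apply: divr_ge0 => //; apply: ltW.
lra.
Qed.

Definition Wk (R : realType) n (k : nat) (w : 'cV[R]_n) :=
  forall i : 'I_n, (k <= i)%N -> w i 0 = 0.

Lemma sand_real (R : realType) (a b q1 q2 u t : R) : 0 < u -> 0 < t ->
  t / (t + u) * a + (1 - t / (t + u)) * b <=
    t / (t + u) * q1 + (1 - t / (t + u)) * q2 ->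
  (a - q1) / u <= (q2 - b) / t.
Proof.
move=> u0 t0 H.
have tu0 : 0 < t + u by lra.
have E1 : t * a + u * b = (t + u) * (t / (t + u) * a + (1 - t / (t + u)) * b).
  by field; lra.
have E2 : t * q1 + u * q2 = (t + u) * (t / (t + u) * q1 + (1 - t / (t + u)) * q2).
  by field; lra.
have H2 : t * a + u * b <= t * q1 + u * q2.
  by rewrite E1 E2; apply: ler_wpM2l => //; apply: ltW.
rewrite ler_pdivrMr // mulrAC ler_pdivlMr //.
nra.
Qed.

Lemma hb_step (R : realType) n (q : 'cV[R]_n -> R) (qc : convexf q) (k : nat)
  (kn : (k < n)%N) (s : 'cV[R]_n) :
  (forall w, Wk k w -> inner s w <= q w) ->
  exists s', forall w, Wk k.+1 w -> inner s' w <= q w.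
Proof.
move=> Hs.
pose i0 := Ordinal kn.
pose e : 'cV[R]_n := delta_mx i0 0.
have sand : forall w u w' t, Wk k w -> Wk k w' -> 0 < u -> 0 < t ->
    (inner s w - q (w - u *: e)) / u <= (q (w' + t *: e) - inner s w') / t.
  move=> w u w' t Ww Ww' u0 t0.
  pose l := t / (t + u).
  have hl : (1 - l) * t = l * u by rewrite /l; field; lra.
  have l01 : 0 <= l <= 1.
    apply/andP; split; first by rewrite /l divr_ge0 //; lra.
    by rewrite /l ler_pdivrMr ?mul1r; lra.
  set z := l *: (w - u *: e) + (1 - l) *: (w' + t *: e).
  have Wz : Wk k z.
    move=> i ki; rewrite /z !mxE (Ww i ki) (Ww' i ki).
    set dd := _%:R.
    have -> : l * (0 - u * dd) + (1 - l) * (0 + t * dd) = dd * ((1 - l) * t - l * u)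
      by ring.
    by rewrite hl subrr mulr0.
  have H1 := Hs _ Wz.
  have H2 := qc (w - u *: e) (w' + t *: e) l l01.
  have Ez : inner s z = l * inner s w + (1 - l) * inner s w'
                       + ((1 - l) * t - l * u) * inner s e.
    rewrite /z innerDr !innerZr innerBr innerDr !innerZr; ring.
  rewrite hl subrr mul0r addr0 in Ez.
  apply: sand_real => //.
  rewrite -/l -Ez; apply: le_trans H1 _; exact: H2.
pose Lset := [set r : R | exists w u, Wk k w /\ 0 < u /\
                r = (inner s w - q (w - u *: e)) / u].
have W0 : Wk k (0 : 'cV[R]_n) by move=> i _; rewrite mxE.
have hne : Lset !=set0.
  by exists ((inner s 0 - q (0 - 1 *: e)) / 1); exists 0, 1; split => //; split.
have hub : ubound Lset ((q (0 + 1 *: e) - inner s 0) / 1).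
  by move=> r [w [u [Ww [u0 ->]]]]; apply: sand.
have hsup : has_sup Lset by split => //; exists ((q (0 + 1 *: e) - inner s 0) / 1).
pose c := sup Lset.
have cle : forall w' t, Wk k w' -> 0 < t -> c <= (q (w' + t *: e) - inner s w') / t.
  move=> w' t Ww' t0; apply: ge_sup => //.
  by move=> r [w [u [Ww [u0 ->]]]]; apply: sand.
have cge : forall w u, Wk k w -> 0 < u -> (inner s w - q (w - u *: e)) / u <= c.
  move=> w u Ww u0; apply: sup_upper_bound => //.
  by exists w, u.
exists (s + (c - inner s e) *: e) => h Wh.
pose t := h i0 0.
pose w := h - t *: e.
have Ww : Wk k w.
  move=> i ki; rewrite /w !mxE.
  have [->|ne] := eqVneq i i0.
    by rewrite !eqxx mulr1 subrr.
  rewrite /= mulr0 subr0; apply: Wh.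
  rewrite ltn_neqAle ki andbT; apply/negP => /eqP E.
  by apply/negP: ne; apply/negPn/eqP; apply: val_inj.
have hw : h = w + t *: e by rewrite /w subrK.
clearbody w.
have iew : inner e w = 0 by rewrite inner_delta; apply: Ww => /=.
have iee : inner e e = 1 by rewrite inner_delta mxE !eqxx.
have Eh : inner (s + (c - inner s e) *: e) h = inner s w + t * c.
  rewrite hw innerDl !innerDr !innerZl !innerZr iew iee.
  ring.
rewrite Eh.
case: (ltgtP t 0) => [tn|tp|t0].
- have u0 : 0 < - t by rewrite oppr_gt0.
  have := cge w (- t) Ww u0.
  rewrite scaleNr opprK -hw ler_pdivrMr //; lra.
- have := cle w t Ww tp.
  rewrite -hw ler_pdivlMr //; lra.
- rewrite t0 mul0r addr0.
  have E : w = h by rewrite hw t0 scale0r addr0.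
  by rewrite E in Ww *; apply: Hs.
Qed.

Lemma hb_ind (R : realType) n (q : 'cV[R]_n -> R) (qc : convexf q) (q0 : q 0 = 0) :
  forall k, (k <= n)%N -> exists s : 'cV[R]_n, forall w, Wk k w -> inner s w <= q w.
Proof.
elim=> [_|k IH kn].
  exists 0 => w Ww.
  have -> : w = 0 by apply/matrixP => i j; rewrite mxE (ord1 j); apply: Ww.
  by rewrite inner0l q0.
have [s Hs] := IH (ltnW kn).
exact: (hb_step qc kn Hs).
Qed.

Lemma subgrad (R : realType) n (phi : 'cV[R]_n -> R) : convexf phi ->
  forall x0, exists s, forall y, phi x0 + inner s (y - x0) <= phi y.
Proof.
move=> pc x0.
pose q h := phi (x0 + h) - phi x0.
have qc : convexf q.
  move=> a b t t01; rewrite /q.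
  have -> : x0 + (t *: a + (1 - t) *: b) = t *: (x0 + a) + (1 - t) *: (x0 + b).
    by rewrite !scalerDr addrACA -scalerDl [t + _]addrC subrK scale1r.
  have := pc (x0 + a) (x0 + b) t t01; lra.
have q0 : q 0 = 0 by rewrite /q addr0 subrr.
have [s Hs] := hb_ind qc q0 (leqnn n).
exists s => y; have := Hs (y - x0).
rewrite /q [x0 + _]addrC subrK.
have -> : Wk n (y - x0) = True.
  by apply/propext; split => // _ i ni; move: (ltn_ord i); rewrite ltnNge ni.
move=> /(_ I); lra.
Qed.

Lemma quad (R : realType) n (mu : R) (v y : 'cV[R]_n) : 0 < mu ->
  inner v y - mu / 4 * inner y y <= inner v v / mu.
Proof.
move=> mu0; rewrite /inner mulr_sumr mulr_suml -sumrB; apply: ler_sum => i _.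
set a := v i 0; set b := y i 0.
have E : a * a / mu - (a * b - mu / 4 * (b * b)) = mu * (a / mu - b / 2) ^+ 2.
  by field; lra.
have : 0 <= mu * (a / mu - b / 2) ^+ 2 by rewrite mulr_ge0 ?sqr_ge0 // ltW.
rewrite -E; lra.
Qed.

Lemma coercive (R : realType) n (f : 'cV[R]_n -> R) : strongly_convex f ->
  exists mu s0, 0 < mu /\ forall y, f 0 + inner s0 y + mu / 4 * inner y y <= f y.
Proof.
move=> sc; have [mu [mu0 H]] := sc.
have [s0 Hs0] := subgrad (sc_convex sc) 0.
exists mu, s0; split => // y.
have h12 : 0 <= (1 / 2 : R) <= 1 by apply/andP; split; lra.
have := H y 0 (1 / 2) h12.
have := Hs0 ((1 / 2) *: y + (1 - 1 / 2) *: 0).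
rewrite scaler0 addr0 !subr0 innerZr.
lra.
Qed.

Definition fset_ (R : realType) n (f : 'cV[R]_n -> R) (d : 'cV[R]_n) :=
  [set inner d y - f y | y in [set: 'cV[R]_n]].

Lemma fconj_hassup (R : realType) n (f : 'cV[R]_n -> R) : strongly_convex f ->
  forall d, has_sup (fset_ f d).
Proof.
move=> /coercive [mu [s0 [mu0 H]]] d; split.
  by exists (inner d 0 - f 0); exists 0.
exists (- f 0 + inner (d - s0) (d - s0) / mu) => _ [y _ <-].
have := quad (d - s0) y mu0; have := H y; rewrite innerBl; lra.
Qed.

Lemma fconj_ge (R : realType) n (f : 'cV[R]_n -> R) : strongly_convex f ->
  forall d y, inner d y - f y <= fconj f d.
Proof.
move=> sc d y; apply: (sup_upper_bound (fconj_hassup sc d)).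
by exists y.
Qed.

Lemma fconj_adh (R : realType) n (f : 'cV[R]_n -> R) : strongly_convex f ->
  forall d (eps : R), 0 < eps -> exists y, fconj f d - eps < inner d y - f y.
Proof.
move=> sc d eps e0; have [r [y _ <-] Hr] := sup_adherent e0 (fconj_hassup sc d).
by exists y.
Qed.

Lemma fconj_le (R : realType) n (f : 'cV[R]_n -> R) (d : 'cV[R]_n) (B : R) :
  (forall y, inner d y - f y <= B) -> fconj f d <= B.
Proof.
move=> H; apply: ge_sup; first by exists (inner d 0 - f 0); exists 0.
by move=> _ [y _ <-].
Qed.

Lemma f_lb (R : realType) n (f : 'cV[R]_n -> R) : strongly_convex f ->
  exists m0, forall y, m0 <= f y.
Proof.
move=> /coercive [mu [s0 [mu0 H]]].
exists (f 0 - inner s0 s0 / mu) => y.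
have := quad (- s0) y mu0; have := H y; rewrite !innerNl innerNr opprK; lra.
Qed.

Lemma linalg (R : realType) m n (A : 'M[R]_(m, n)) (s : 'cV[R]_n) :
  (forall w, A *m w = 0 -> inner s w = 0) -> exists y, A^T *m y = s.
Proof.
move=> H.
have sub : (s^T <= A)%MS.
  rewrite submxE; apply/eqP/matrixP => i j; rewrite !mxE.
  have := H (col j (cokermx A)); rewrite colE mulmxA -colE mulmx_coker.
  rewrite mul0mx.
  move=> /(_ erefl) E; rewrite -[X in _ = X]E /inner; apply: eq_bigr => k _.
  by rewrite !mxE (ord1 i).
exists (s^T *m pinvmx A)^T.
by rewrite -trmx_mul mulmxKpV // trmxK.
Qed.

Lemma duality (R : realType) m n (A : 'M[R]_(m, n)) (b : 'cV[R]_m)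
  (f : 'cV[R]_n -> R) (xhat : 'cV[R]_n) :
  strongly_convex f -> A *m xhat = b ->
  (forall z : 'cV[R]_n, A *m z = b -> f xhat <= f z) ->
  Psihat f A b = - f xhat.
Proof.
move=> sc Axb opt.
have [m0 Hm0] := f_lb sc.
pose G u := [set f (xhat + u + w) | w in [set w : 'cV[R]_n | A *m w = 0]].
pose g u := inf (G u).
have Gne : forall u, G u !=set0 by move=> u; exists (f (xhat + u + 0)); exists 0 => //=; rewrite mulmx0.
have Glb : forall u, has_lbound (G u) by move=> u; exists m0 => _ [w _ <-].
have g_le : forall u w, A *m w = 0 -> g u <= f (xhat + u + w).
  by move=> u w Aw; apply: (ge_inf (Glb u)); exists w.
have g_ge : forall u c, (forall w, A *m w = 0 -> c <= f (xhat + u + w)) -> c <= g u.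
  by move=> u c H; apply: lb_le_inf => // _ [w Aw <-]; apply: H.
have inf_scale : forall u t X, 0 <= t ->
    (forall w, A *m w = 0 -> X <= t * f (xhat + u + w)) -> X <= t * g u.
  move=> u t X t0 H.
  move: H; have [->|tn0] := eqVneq t 0 => H.
    by rewrite mul0r; have := H 0; rewrite mulmx0 mul0r; apply.
  have tp : 0 < t by rewrite lt_def tn0 t0.
  rewrite -ler_pdivrMl //; apply: (g_ge) => w Aw.
  by rewrite ler_pdivrMl //; apply: H.
have gc : convexf g.
  move=> a c t /andP[t0 t1].
  set mid := t *: a + (1 - t) *: c.
  suff H : forall w1 w2, A *m w1 = 0 -> A *m w2 = 0 ->
      g mid <= t * f (xhat + a + w1) + (1 - t) * f (xhat + c + w2).
    have : g mid - t * g a <= (1 - t) * g c.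
      apply: (inf_scale); first by rewrite subr_ge0.
      move=> w2 Aw2.
      suff : g mid - (1 - t) * f (xhat + c + w2) <= t * g a by lra.
      apply: (inf_scale) => // w1 Aw1.
      have := H w1 w2 Aw1 Aw2; lra.
    lra.
  move=> w1 w2 Aw1 Aw2.
  have Aw : A *m (t *: w1 + (1 - t) *: w2) = 0.
    by rewrite mulmxDr -!scalemxAr Aw1 Aw2 !scaler0 addr0.
  apply: le_trans (g_le mid _ Aw) _.
  have -> : xhat + mid + (t *: w1 + (1 - t) *: w2) =
            t *: (xhat + a + w1) + (1 - t) *: (xhat + c + w2).
    by apply/matrixP => i j; rewrite !mxE; ring.
  by apply: (sc_convex sc); rewrite t0 t1.
have g0 : g 0 = f xhat.
  apply/le_anti/andP; split.
    by have := g_le 0 0 (mulmx0 _ _); rewrite !addr0.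
  apply: (g_ge) => w Aw; apply: opt.
  by rewrite addr0 mulmxDr Aw addr0.
have [s Hs] := subgrad gc 0.
have orth : forall w, A *m w = 0 -> inner s w = 0.
  move=> w Aw.
  have h1 : g w <= f xhat.
    by have := g_le w (- w); rewrite mulmxN Aw oppr0 addrK; apply.
  have h2 : g (- w) <= f xhat.
    by have := g_le (- w) w; rewrite Aw subrK; apply.
  have := Hs w; have := Hs (- w); rewrite !subr0 g0 innerNr; lra.
have lagr : forall z, f xhat + inner s (z - xhat) <= f z.
  move=> z; have := Hs (z - xhat); rewrite subr0 g0 => /le_trans; apply.
  by have := g_le (z - xhat) 0 (mulmx0 _ _); rewrite addr0 [xhat + _]addrC subrK.
have [ys Hys] := linalg orth.
have weak : forall y, - f xhat <= Psi f A b y.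
  move=> y; rewrite /Psi; have := fconj_ge sc (A^T *m y) xhat.
  rewrite inner_tr Axb innerC; lra.
have strong : Psi f A b ys <= - f xhat.
  rewrite /Psi.
  have : fconj f (A^T *m ys) <= inner s xhat - f xhat.
    apply: fconj_le => z; have := lagr z; rewrite Hys innerBr; lra.
  rewrite -Axb [inner (A *m xhat) _]innerC -inner_tr Hys; lra.
rewrite /Psihat; apply/le_anti/andP; split.
  apply: le_trans strong; apply: ge_inf; last by exists ys.
  by exists (- f xhat) => _ [y _ <-].
apply: lb_le_inf; first by exists (Psi f A b 0); exists 0.
by move=> _ [y _ <-].
Qed.

Lemma frechet (R : realType) n (F : 'cV[R]_n -> R) (d : 'cV[R]_n) :
  differentiable F d -> forall eps : R, 0 < eps ->
  exists r : R, 0 < r /\ forall h, `|h| < r ->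
    `|F (h + d) - F d - 'd F d h| <= eps * `|h|.
Proof.
move=> Hd eps e0.
have L := diff_locally Hd.
move/eqaddoP: L => L.
have [r Hr] := nbhs_ex (L eps e0).
exists r%:num; split => // h hr.
have := Hr h.
rewrite -ball_normE /ball_ /= add0r normrN => /(_ hr).
by rewrite /shift /= opprD addrA.
Qed.

Lemma coord_le (R : realType) n (e : 'cV[R]_n) (i : 'I_n) : `|e i 0| <= `|e|.
Proof.
by rewrite [leRHS]/Num.Def.normr /= mx_normrE; apply/bigmax_geP; right => /=; exists (i, 0).
Qed.

Lemma norm_sq (R : realType) n (e : 'cV[R]_n) : `|e| ^+ 2 <= inner e e.
Proof.
have [E|E] := eqVneq (mx_norm e) 0.
  have -> : `|e| = 0 by exact: E.
  by rewrite expr0n /= inner_ge0.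
have [[i j] Hi] := mx_norm_neq0 E.
have -> : `|e| = `|e i j| by exact: Hi.
rewrite (ord1 j) /= real_normK ?num_real //.
rewrite /inner (bigD1 i) //= expr2 lerDl; apply: sumr_ge0 => k _.
by rewrite -expr2 sqr_ge0.
Qed.

Lemma inner_bound (R : realType) n (v e : 'cV[R]_n) :
  `|inner v e| <= (\sum_i `|v i 0|) * `|e|.
Proof.
rewrite /inner mulr_suml; apply: le_trans (ler_norm_sum _ _ _) _.
apply: ler_sum => i _; rewrite normrM; apply: ler_wpM2l => //.
exact: coord_le.
Qed.

Lemma fy_grad (R : realType) n (f : 'cV[R]_n -> R) (d x : 'cV[R]_n) :
  strongly_convex f -> is_gradient (fconj f) d x ->
  fconj f d = inner d x - f x.
Proof.
move=> sc [Hd Hg].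
set S := fconj f d.
have up : inner d x - f x <= S by apply: fconj_ge.
have near : forall delta : R, 0 < delta -> exists r : R, 0 < r /\
    forall y, `|y - x| <= 2 * ((S - (inner d y - f y)) / r) + delta.
  move=> delta d0; have [r [r0 Hr]] := frechet Hd d0.
  exists r; split => // y.
  set gap := S - (inner d y - f y).
  have gap0 : 0 <= gap by rewrite subr_ge0; apply: fconj_ge.
  have gr0 : 0 <= gap / r by rewrite divr_ge0 // ltW.
  set e := y - x.
  have [E|E] := eqVneq `|e| 0.
    rewrite E; lra.
  have N0 : 0 < `|e| by rewrite lt_def E normr_ge0.
  set N := `|e| in N0 E *.
  pose a := r / (2 * N).
  have a0 : 0 < a by rewrite /a divr_gt0 // mulr_gt0.
  have aN : a * N = r / 2 by rewrite /a; field; lra.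
  pose h := a *: e.
  have nh : `|h| = r / 2 by rewrite /h normrZ gtr0_norm.
  have := Hr h; rewrite nh Hg => /(_ ltac:(lra)).
  rewrite ler_norml => /andP[_ H1].
  have H2 := fconj_ge sc (h + d) y.
  have H3 : inner h y - inner x h = a * inner e e.
    by rewrite /h innerZl innerZr [inner x e]innerC -mulrBr -innerBr.
  have H4 : a * N ^+ 2 <= a * inner e e.
    by apply: ler_wpM2l; [exact: ltW | exact: norm_sq].
  have H5 : a * N ^+ 2 = r / 2 * N by rewrite expr2 mulrA aN.
  have key : r / 2 * N <= gap + delta * (r / 2).
    move: H1 H2 H3 H4 H5; rewrite innerDl /gap /S; lra.
  have -> : 2 * (gap / r) + delta = (2 / r) * (gap + delta * (r / 2)) by field; lra.
  have -> : N = (2 / r) * (r / 2 * N) by field; lra.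
  by rewrite ler_wpM2l // divr_ge0 // ltW.
have [s Hs] := subgrad (sc_convex sc) x.
set C := \sum_i `|(d - s) i 0|.
have C0 : 0 <= C by apply: sumr_ge0 => i _.
apply/le_anti/andP; split; last exact: up.
apply/ler_addgt0Pr => eta eta0.
pose delta := eta / (2 * (C + 1)).
have delta0 : 0 < delta by rewrite divr_gt0 // mulr_gt0 //; lra.
have [r [r0 Hr]] := near delta delta0.
pose K := 1 + 2 * (C / r).
have K0 : 0 < K.
  have : 0 <= C / r by rewrite divr_ge0 // ltW.
  rewrite /K; lra.
pose eps := eta / (2 * K).
have eps0 : 0 < eps by rewrite divr_gt0 // mulr_gt0.
have [y Hy] := fconj_adh sc d eps0.
set gap := S - (inner d y - f y).
have gap0 : 0 <= gap by rewrite subr_ge0; apply: fconj_ge.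
have gapeps : gap < eps by move: Hy; rewrite /gap /S; lra.
have HN := Hr y.
have Hb := inner_bound (d - s) (y - x).
have Hsx := Hs y.
have E1 : inner (d - s) (y - x) = inner d y - inner d x - inner s (y - x).
  by rewrite innerBl [inner d _]innerBr.
have h1 : C * `|y - x| <= C * (2 * (gap / r) + delta) by apply: ler_wpM2l.
have E2 : gap + C * (2 * (gap / r) + delta) = gap * K + C * delta.
  by rewrite /K; field; lra.
have h2 : gap * K <= eta / 2.
  have -> : eta / 2 = eps * K by rewrite /eps; field; lra.
  by apply: ler_wpM2r; [exact: ltW | exact: ltW].
have h3 : C * delta <= eta / 2.
  have -> : C * delta = eta / 2 * (C / (C + 1)) by rewrite /delta; field; lra.
  rewrite -[leRHS]mulr1; apply: ler_wpM2l; first by lra.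
  by rewrite ler_pdivrMr ?mul1r; lra.
move: Hb; rewrite ler_norml => /andP[Hb1 Hb2].
have s1 : inner d y - f y - (inner d x - f x) <= C * `|y - x|.
  move: Hb2 Hsx; rewrite E1 /C; lra.
have s2 : gap + C * `|y - x| <= eta by lra.
move: s1 s2; rewrite /gap /S; lra.
Qed.

Theorem lemma1 (R : realType) (m n : nat) (A : 'M[R]_(m, n)) (b : 'cV[R]_m)
  (f : 'cV[R]_n -> R) (xhat : 'cV[R]_n)
  (y : nat -> 'cV[R]_m) (d x : nat -> 'cV[R]_n) :
  (exists x0 : 'cV[R]_n, A *m x0 = b) ->
  strongly_convex f ->
  A *m xhat = b ->
  (forall z : 'cV[R]_n, A *m z = b -> f xhat <= f z) ->
  (forall k, d k = A^T *m y k) ->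
  (forall k, is_gradient (fconj f) (d k) (x k)) ->
  forall k, bregman f (d k) (x k) xhat = Psi f A b (y k) - Psihat f A b.
Proof.
move=> _ sc Axb opt Hd Hg k.
rewrite (duality sc Axb opt) /Psi -Hd (fy_grad sc (Hg k)) /bregman.
rewrite -Axb [inner (A *m xhat) _]innerC -inner_tr -Hd innerBr [inner (d k) xhat]innerC.
ring.
Qed.
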